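(* Let $\lambda\in\mathbb{R}$. Let $\psi\in C^\infty\big(\mathbb{R}^n\times(\mathbb{R}^n\setminus\{0\})\big)$ be positively homogeneous of degree $\lambda$ in $\xi$ and satisfy $\psi(x+\tau\xi,\xi)=\psi(x,\xi)$ for all $\tau\in\mathbb{R}$. Let $\varphi$ be the restriction of $\psi$ to $T\mathbb{S}^{n-1}$. Then for every integer $k\ge1$ and all indices $1\le i_1,j_1,\dots,i_k,j_k\le n$, $$(J_{i_1j_1}\cdots J_{i_kj_k}\psi)|_{T\mathbb{S}^{n-1}}=E_1E_2\cdots E_k\varphi,$$ where $$E_l=\mathcal{J}_{i_lj_l}-c_l(\lambda,k)\big(\xi_{i_l}X_{j_l}-\xi_{j_l}X_{i_l}\big),\qquad c_l(\lambda,k)=\lambda-k+l+1,$$ and the composition is taken with $E_1$ leftmost.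
   Context: $T\mathbb{S}^{n-1}=\{(x,\xi):|\xi|=1,\ \langle x,\xi\rangle=0\}$. Positive homogeneity of degree $\lambda$ in $\xi$ means $\psi(x,c\xi)=c^\lambda\psi(x,\xi)$ for $c>0$. The John operators are $J_{ij}=\partial^2/\partial x^i\partial\xi^j-\partial^2/\partial x^j\partial\xi^i$. Define vector fields on $\mathbb{R}^n\times\mathbb{R}^n$ (summation over $p$) $$\tilde X_i=\partial/\partial x^i-\xi_i\xi^p\,\partial/\partial x^p,\qquad \tilde\Xi_i=\partial/\partial\xi^i-x_i\xi^p\,\partial/\partial x^p-\xi_i\xi^p\,\partial/\partial\xi^p.$$ These are tangent to $T\mathbb{S}^{n-1}$; $X_i,\Xi_i$ are their restrictions, and $\mathcal{J}_{ij}=X_i\Xi_j-X_j\Xi_i$. Here $\xi_i=\xi^i$ acts by multiplication. *)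

(* Defs.v *)
From HB Require Import structures.
From mathcomp Require Import all_boot all_order all_algebra.
From mathcomp Require Import all_classical all_reals all_analysis.
Set Implicit Arguments. Unset Strict Implicit. Unset Printing Implicit Defensive.
Import Order.TTheory GRing.Theory Num.Theory.
Import numFieldNormedType.Exports.
Local Open Scope ring_scope.

Section Defs.
Variables (R : realType) (n : nat).
Notation vec := 'rV[R]_n.

(* standard basis vector e_i and coordinates v_i := v 0 i *)
Definition ev (i : 'I_n) : vec := delta_mx 0 i.
Definition dot (u v : vec) : R := \sum_(k < n) u 0 k * v 0 k.
Definition enorm (u : vec) : R := Num.sqrt (dot u u).

Definition inTS (x xi : vec) : bool := (dot xi xi == 1) && (dot x xi == 0).

Definition fn := vec -> vec -> R.

Definition dx (i : 'I_n) (f : fn) : fn :=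
  fun x xi => derive1 (fun t : R => f (x + t *: ev i) xi) 0.
Definition dxi (i : 'I_n) (f : fn) : fn :=
  fun x xi => derive1 (fun t : R => f x (xi + t *: ev i)) 0.

Fixpoint iterd (s : seq (bool * 'I_n)) (f : fn) : fn :=
  match s with
  | [::] => f
  | (b, i) :: s' => (if b then dxi i else dx i) (iterd s' f)
  end.

Definition smooth_off0 (f : fn) : Prop :=
  forall s : seq (bool * 'I_n), forall x xi : vec, xi != 0 ->
    (forall i : 'I_n,
        derivable (fun t : R => iterd s f (x + t *: ev i) xi) 0 1 /\
        derivable (fun t : R => iterd s f x (xi + t *: ev i)) 0 1) /\
    {for (x, xi), continuous (fun p : vec * vec => iterd s f p.1 p.2)}.

Definition Jop (i j : 'I_n) (f : fn) : fn :=
  fun x xi => dx i (dxi j f) x xi - dx j (dxi i f) x xi.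

Definition restrTS (f : fn) : fn := fun x xi => if inTS x xi then f x xi else 0.

(* Action of the tangent vector fields X_i, Xi_i on functions on T S^{n-1}:
   X f (p) = (f o gamma)'(0) for a curve gamma lying in T S^{n-1} with
   gamma(0) = p and gamma'(0) = (tilde X)(p).  Only values of f on
   T S^{n-1} are used (when p is in T S^{n-1}). *)
(* X_i: tilde X_i = (e_i - xi_i xi, 0); the curve is the straight line. *)
Definition Xop (i : 'I_n) (f : fn) : fn :=
  fun x xi => derive1 (fun t : R => f (x + t *: (ev i - xi 0 i *: xi)) xi) 0.
(* Xi_i: tilde Xi_i = (- x_i xi, e_i - xi_i xi). *)
Definition curve_xi (i : 'I_n) (x xi : vec) (t : R) : vec :=
  let eta := xi + t *: (ev i - xi 0 i *: xi) in (enorm eta)^-1 *: eta.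
Definition curve_x (i : 'I_n) (x xi : vec) (t : R) : vec :=
  let y := x - (t * x 0 i) *: xi in
  let w := curve_xi i x xi t in y - dot y w *: w.
Definition Xiop (i : 'I_n) (f : fn) : fn :=
  fun x xi => derive1 (fun t : R => f (curve_x i x xi t) (curve_xi i x xi t)) 0.

Definition calJ (i j : 'I_n) (f : fn) : fn :=
  fun x xi => Xop i (Xiop j f) x xi - Xop j (Xiop i f) x xi.

Definition Eop (c : R) (i j : 'I_n) (f : fn) : fn :=
  fun x xi => calJ i j f x xi - c * (xi 0 i * Xop j f x xi - xi 0 j * Xop i f x xi).

Definition Jprod (s : seq ('I_n * 'I_n)) (f : fn) : fn :=
  foldr (fun p g => Jop p.1 p.2 g) f s.

(* E_1 ... E_k phi, with E_1 leftmost, c_l = lam - k + l + 1, k = size s *)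
Definition Eprod (lam : R) (s : seq ('I_n * 'I_n)) (f : fn) : fn :=
  foldr (fun pl g => Eop (lam - (size s)%:R + (pl.2)%:R + 1) pl.1.1 pl.1.2 g)
        f (zip s (iota 1 (size s))).

End Defs.

(* Main.v *)
Set Warnings "-notation-overridden,-ambiguous-paths,-notation-incompatible-prefix,-deprecated".
Require Import Defs.
From HB Require Import structures.
From mathcomp Require Import all_boot all_order all_algebra.
From mathcomp Require Import all_classical all_reals all_analysis.
From mathcomp Require Import ring lra.
Import Order.TTheory GRing.Theory Num.Theory.
Import numFieldNormedType.Exports.
Local Open Scope ring_scope.
Local Open Scope classical_set_scope.
Local Open Scope ring_scope.

Section P1.
Context {R : realType} {n : nat}.
Local Notation vec := 'rV[R]_n.

Lemma evE (i j : 'I_n) : (ev R i) 0 j = (i == j)%:R.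
Proof. by rewrite /ev mxE eqxx eq_sym. Qed.

Lemma dotC (u v : vec) : dot u v = dot v u.
Proof. by rewrite /dot; apply: eq_bigr => k _; rewrite mulrC. Qed.

Lemma dotDl (u v w : vec) : dot (u + v) w = dot u w + dot v w.
Proof. by rewrite /dot -big_split; apply: eq_bigr => k _; rewrite mxE mulrDl. Qed.

Lemma dotZl a (u v : vec) : dot (a *: u) v = a * dot u v.
Proof. by rewrite /dot mulr_sumr; apply: eq_bigr => k _; rewrite mxE mulrA. Qed.

Lemma dotNl (u v : vec) : dot (- u) v = - dot u v.
Proof. by rewrite -scaleN1r dotZl mulN1r. Qed.

Lemma dotBl (u v w : vec) : dot (u - v) w = dot u w - dot v w.
Proof. by rewrite dotDl dotNl. Qed.

Lemma dotDr (u v w : vec) : dot w (u + v) = dot w u + dot w v.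
Proof. by rewrite dotC dotDl !(dotC w). Qed.

Lemma dotZr a (u v : vec) : dot v (a *: u) = a * dot v u.
Proof. by rewrite dotC dotZl dotC. Qed.

Lemma dotBr (u v w : vec) : dot w (u - v) = dot w u - dot w v.
Proof. by rewrite dotC dotBl !(dotC w). Qed.

Lemma dot_evl (i : 'I_n) (v : vec) : dot (ev R i) v = v 0 i.
Proof.
rewrite /dot (bigD1 i) //= evE eqxx mul1r big1 ?addr0 // => k /negPf ki.
by rewrite evE eq_sym ki mul0r.
Qed.

Lemma dot_evr (i : 'I_n) (v : vec) : dot v (ev R i) = v 0 i.
Proof. by rewrite dotC dot_evl. Qed.

Lemma dot0l (v : vec) : dot 0 v = 0.
Proof. by rewrite /dot big1 // => k _; rewrite mxE mul0r. Qed.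

Lemma dot_ge0 (v : vec) : 0 <= dot v v.
Proof. by rewrite /dot sumr_ge0 // => k _; rewrite -expr2 sqr_ge0. Qed.

Lemma inTS_neq0 {x xi : vec} : inTS x xi -> xi != 0.
Proof.
case/andP => /eqP h _; apply/negP => /eqP e; move: h.
by rewrite e dot0l => /eqP; rewrite eq_sym oner_eq0.
Qed.

Lemma inTSE {x xi : vec} : inTS x xi -> dot xi xi = 1 /\ dot x xi = 0.
Proof. by case/andP => /eqP -> /eqP ->. Qed.

Definition vdir (i : 'I_n) (xi : vec) : vec := ev R i - xi 0 i *: xi.

Lemma dot_vdir (i : 'I_n) {x xi : vec} : inTS x xi -> dot (vdir i xi) xi = 0.
Proof.
move=> /inTSE [h1 h2]; rewrite /vdir dotBl dotZl h1 dot_evl mulr1 subrr //.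
Qed.

Lemma TS_line (i : 'I_n) (x xi : vec) t : inTS x xi ->
  inTS (x + t *: vdir i xi) xi.
Proof.
move=> h; have [h1 h2] := inTSE h.
by rewrite /inTS h1 eqxx /= dotDl dotZl (dot_vdir i h) h2 mulr0 addr0.
Qed.

Lemma dot_eta (i : 'I_n) (x xi : vec) t : inTS x xi ->
  dot (xi + t *: vdir i xi) (xi + t *: vdir i xi) =
  1 + t ^+ 2 * dot (vdir i xi) (vdir i xi).
Proof.
move=> h; have [h1 h2] := inTSE h; have h3 := dot_vdir i h.
move: (vdir i xi) h3 => v h3.
rewrite !dotDl !dotDr !dotZl !dotZr h1 h3 dotC h3; ring.
Qed.

Lemma dot_eta_ge1 (i : 'I_n) (x xi : vec) t : inTS x xi ->
  1 <= dot (xi + t *: vdir i xi) (xi + t *: vdir i xi).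
Proof.
move=> h; rewrite (@dot_eta i x xi t h) lerDl mulr_ge0 // ?sqr_ge0 ?dot_ge0 //.
Qed.

Lemma curve_xiE (i : 'I_n) (x xi : vec) t :
  curve_xi i x xi t = (enorm (xi + t *: vdir i xi))^-1 *: (xi + t *: vdir i xi).
Proof. by []. Qed.

Lemma curve_xE (i : 'I_n) (x xi : vec) t :
  curve_x i x xi t = (x - (t * x 0 i) *: xi) -
    dot (x - (t * x 0 i) *: xi) (curve_xi i x xi t) *: curve_xi i x xi t.
Proof. by []. Qed.

Lemma dot_normalize (v : vec) : 0 < dot v v ->
  dot ((enorm v)^-1 *: v) ((enorm v)^-1 *: v) = 1.
Proof.
move=> h; rewrite dotZl dotZr mulrA -expr2 /enorm exprVn sqr_sqrtr ?ltW //.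
by rewrite mulVf // gt_eqF.
Qed.

Lemma TS_curve (i : 'I_n) (x xi : vec) t : inTS x xi ->
  inTS (curve_x i x xi t) (curve_xi i x xi t).
Proof.
move=> h; have hw : dot (curve_xi i x xi t) (curve_xi i x xi t) = 1.
  rewrite curve_xiE dot_normalize //.
  exact: lt_le_trans ltr01 (@dot_eta_ge1 i x xi t h).
rewrite /inTS hw eqxx /= curve_xE dotBl dotZl hw mulr1 subrr //.
Qed.

End P1.

Section P2.
Context {R : realType}.

Lemma quotE (F : R -> R) (u : R) :
  (fun h : R => h^-1 *: ((F \o shift u) (h *: 1) - F u)) =
  (fun h => h^-1 * (F (h + u) - F u)).
Proof. by apply/funext => h /=; rewrite [_%:A]mulr1. Qed.

Lemma is_derive_cvgP (F : R -> R) (u l : R) :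
  is_derive u 1 F l <-> (fun h => h^-1 * (F (h + u) - F u)) @ 0^' --> l.
Proof.
split.
  case=> dF <-; move: dF; rewrite /derivable /derive quotE => dF.
  exact: dF.
move=> cv; have dF : derivable F u 1 by rewrite /derivable quotE; apply/cvg_ex; exists l.
apply: DeriveDef => //; rewrite /derive quotE; exact: cvg_lim.
Qed.

Lemma is_derive_shift0 (g : R -> R) (u d : R) :
  is_derive (0:R) 1 (fun h : R => g (h + u)) d -> is_derive u 1 g d.
Proof.
move/is_derive_cvgP => h; apply/is_derive_cvgP.
by move: h; rewrite add0r; under eq_fun do rewrite addr0.
Qed.

Lemma mvt0 (g g' : R -> R) (a : R) :
  (forall u : R, is_derive u 1 g (g' u)) ->
  exists2 th, `|th| <= `|a| & g a - g 0 = a * g' th.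
Proof.
move=> hd.
have cont : forall a b : R, {within `[a, b], continuous g}.
  by move=> a0 b0; apply: derivable_within_continuous => x _; case: (hd x).
case: (ltgtP a 0) => [a0|a0|->].
- have [c cab E] := MVT_segment (ltW a0) (fun x _ => hd x) (cont _ _).
  exists c; last by rewrite -opprB E sub0r mulrN opprK mulrC.
  move: cab; rewrite in_itv /= => /andP [h1 h2].
  by rewrite !ler0_norm ?(ltW a0) // lerN2.
- have [c cab E] := MVT_segment (ltW a0) (fun x _ => hd x) (cont _ _).
  exists c; last by rewrite E subr0 mulrC.
  move: cab; rewrite in_itv /= => /andP [h1 h2].
  by rewrite !ger0_norm ?(ltW a0).
- by exists 0; rewrite ?normr0 // subrr mul0r.
Qed.

Lemma squeeze0 (T : Type) (F : set_system T) {FF : Filter F} (th a : T -> R) :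
  (\forall h \near F, `|th h| <= `|a h|) -> a @ F --> 0 -> th @ F --> 0.
Proof.
move=> hle /cvgr0Pnorm_lt ha; apply/cvgr0Pnorm_lt => e e0.
by apply: filterS2 hle (ha e e0) => t h1 h2; exact: le_lt_trans h1 h2.
Qed.

Context {n : nat}.
Local Notation vec := 'rV[R]_n.

Lemma nz_near (q : vec) (j : 'I_n) : q != 0 ->
  exists2 e : R, 0 < e & forall b : R, `|b| < e -> q + b *: ev R j != 0.
Proof.
move=> qn0.
have /existsP [k qk] : [exists k, q 0 k != 0].
  apply: contraNT qn0 => /existsPn H; apply/eqP/rowP => k; rewrite mxE.
  by move: (H k); rewrite negbK => /eqP.
exists `|q 0 k|; first by rewrite normr_gt0.
move=> b hb; apply/negP => /eqP /rowP /(_ k); rewrite !mxE /= => E.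
move: hb; have -> : q 0 k = - (b * ((k == j))%:R).
  by apply/eqP; rewrite -addr_eq0 E.
rewrite normrN normrM; case: (k == j); rewrite ?normr1 ?normr0 ?mulr1 ?mulr0 ?ltxx //.
by rewrite ltNge normr_ge0.
Qed.

Lemma cvg_pt (T : Type) (F : set_system T) {FF : Filter F}
  (g : vec -> vec -> R) (p q : vec) (u1 u2 u3 : T -> R) (i1 i2 i3 : 'I_n) :
  u1 @ F --> 0 -> u2 @ F --> 0 -> u3 @ F --> 0 ->
  {for (p, q), continuous (fun P : vec * vec => g P.1 P.2)} ->
  (fun h => g (p + u1 h *: ev R i1 + u2 h *: ev R i2) (q + u3 h *: ev R i3))
    @ F --> g p q.
Proof.
move=> c1 c2 c3 cg.
have cA : (fun h => p + u1 h *: ev R i1 + u2 h *: ev R i2) @ F -->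
    p + 0 *: ev R i1 + 0 *: ev R i2.
  apply: cvgD; [apply: cvgD; [exact: cvg_cst|] |]; apply: cvgZ => //; exact: cvg_cst.
have cB : (fun h => q + u3 h *: ev R i3) @ F --> q + 0 *: ev R i3.
  apply: cvgD; [exact: cvg_cst|]; apply: cvgZ => //; exact: cvg_cst.
rewrite !scale0r !addr0 in cA cB.
exact: (continuous2_cvg _ cg cA cB).
Qed.

End P2.
Arguments mvt0 {R g g'} a.
Arguments squeeze0 {R T F FF th} a.
Arguments nz_near {R n q} j.
Arguments cvg_pt {R n T F FF g p q u1 u2 u3} i1 i2 i3.
Arguments is_derive_shift0 {R g u d}.

Section P3.
Context {R : realType} {n : nat}.
Local Notation vec := 'rV[R]_n.
Local Notation fnR := (fn R n).

Lemma iterd_cat (s1 s2 : seq (bool * 'I_n)) (f : fnR) :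
  iterd s1 (iterd s2 f) = iterd (s1 ++ s2) f.
Proof. by elim: s1 => [|[b i] s1 IH] //=; rewrite IH. Qed.

Lemma sm_iterd (s : seq (bool * 'I_n)) {f : fnR} :
  smooth_off0 f -> smooth_off0 (iterd s f).
Proof. by move=> hf s' x xi xn0; rewrite iterd_cat; exact: hf. Qed.

Lemma der_cont {B : R -> R} {x b : R} : is_derive x 1 B b -> B @ x^' --> B x.
Proof.
case=> dB _; apply: cvg_within_filter.
by apply/differentiable_continuous; apply/derivable1_diffP.
Qed.

Lemma sm_dx0 {f : fnR} (i : 'I_n) (x xi : vec) : smooth_off0 f -> xi != 0 ->
  is_derive (0:R) 1 (fun t : R => f (x + t *: ev R i) xi) (dx i f x xi).
Proof.
move=> hf xn0; have [/(_ i) [d _] _] := hf [::] x xi xn0.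
by rewrite /dx derive1E; exact: derivableP.
Qed.

Lemma sm_dxi0 {f : fnR} (j : 'I_n) (x xi : vec) : smooth_off0 f -> xi != 0 ->
  is_derive (0:R) 1 (fun t : R => f x (xi + t *: ev R j)) (dxi j f x xi).
Proof.
move=> hf xn0; have [/(_ j) [_ d] _] := hf [::] x xi xn0.
by rewrite /dxi derive1E; exact: derivableP.
Qed.

Lemma sm_dxu {f : fnR} (i : 'I_n) (x xi : vec) (u : R) : smooth_off0 f -> xi != 0 ->
  is_derive u 1 (fun t : R => f (x + t *: ev R i) xi) (dx i f (x + u *: ev R i) xi).
Proof.
move=> hf xn0; apply: is_derive_shift0.
have -> : (fun h : R => f (x + (h + u) *: ev R i) xi) =
          (fun h : R => f ((x + u *: ev R i) + h *: ev R i) xi).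
  by apply/funext => h; rewrite scalerDl addrA addrAC.
exact: sm_dx0.
Qed.

Lemma sm_cont {f : fnR} (x xi : vec) : smooth_off0 f -> xi != 0 ->
  {for (x, xi), continuous (fun P : vec * vec => f P.1 P.2)}.
Proof. by move=> hf xn0; have [_ c] := hf [::] x xi xn0. Qed.

Lemma cvg_pt2 {T : Type} {F : set_system T} {FF : Filter F}
  {g : vec -> vec -> R} {p q : vec} {u1 u3 : T -> R} (i1 i3 : 'I_n) :
  u1 @ F --> 0 -> u3 @ F --> 0 ->
  {for (p, q), continuous (fun P : vec * vec => g P.1 P.2)} ->
  (fun h => g (p + u1 h *: ev R i1) (q + u3 h *: ev R i3)) @ F --> g p q.
Proof.
move=> c1 c3 cg.
have := cvg_pt (u2 := fun _ => 0) i1 i1 i3 c1 (cvg_cst _) c3 cg.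
move=> /(_ FF FF). by under eq_fun do rewrite scale0r addr0.
Qed.

Lemma D2 (f : fnR) (p q : vec) (i j : 'I_n) (A B : R -> R) (a b : R) :
  smooth_off0 f -> q != 0 -> A 0 = 0 -> B 0 = 0 ->
  is_derive (0:R) 1 A a -> is_derive (0:R) 1 B b ->
  is_derive (0:R) 1 (fun t => f (p + A t *: ev R i) (q + B t *: ev R j))
    (a * dx i f p q + b * dxi j f p q).
Proof.
move=> hf qn0 A0 B0 dA dB.
pose H := fun t => f p (q + B t *: ev R j).
pose D := fun t => f (p + A t *: ev R i) (q + B t *: ev R j) - H t.
have -> : (fun t => f (p + A t *: ev R i) (q + B t *: ev R j)) = D + H.
  by apply/funext => t; rewrite /D /= subrK.
apply: is_deriveD; last first.
  rewrite mulrC; have -> : H = (fun s => f p (q + s *: ev R j)) \o B by [].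
  apply: is_derive1_comp; rewrite B0; exact: sm_dxi0.
have [e e0 he] := nz_near j qn0.
have ex : forall h, exists th : R, `|B h| < e ->
    `|th| <= `|A h| /\ D h = A h * dx i f (p + th *: ev R i) (q + B h *: ev R j).
  move=> h; case: (boolP (`|B h| < e)) => hb; last by exists 0.
  have qn : q + B h *: ev R j != 0 by exact: he.
  have [th th1 th2] := mvt0 (A h) (fun u => sm_dxu i p (q + B h *: ev R j) u hf qn).
  exists th => _; split => //; rewrite /D /H -th2 scale0r addr0 //.
have [th hth] := choice ex.
have cB := der_cont dB; rewrite B0 in cB.
have cA := der_cont dA; rewrite A0 in cA.
have nB : \forall h \near 0^', `|B h| < e.
  by move/cvgr0Pnorm_lt : cB => /(_ e e0).
have cth : th @ 0^' --> 0.
  apply: (squeeze0 A _ cA).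
  by apply: filterS nB => h /hth [].
have cK := cvg_pt2 (FF := dnbhs_filter _) i j cth cB (sm_cont p q (sm_iterd [:: (false, i)] hf) qn0).
have cQ : (fun h => h^-1 * (A (h + 0) - A 0)) @ 0^' --> a by apply/is_derive_cvgP.
apply/is_derive_cvgP.
have D0 : D 0 = 0 by rewrite /D /H A0 B0 !scale0r !addr0 subrr.
apply: cvg_trans (cvgM cQ cK).
apply: near_eq_cvg; near=> h.
have hb : `|B h| < e by near: h.
have hn0 : h != 0 by near: h; exact: nbhs_dnbhs_neq.
rewrite /= D0 A0 !addr0 !subr0; have [_ ->] := hth h hb.
by rewrite mulrA.
Unshelve. all: by end_near.
Qed.

End P3.

Section P4.
Context {R : realType} {n : nat}.
Local Notation vec := 'rV[R]_n.
Local Notation fnR := (fn R n).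

Lemma id0 : (fun h : R => h) @ 0^' --> (0:R).
Proof. exact: cvg_within_filter cvg_id. Qed.

Lemma delta_mvt {f : fnR} (i j : 'I_n) (z xi : vec) :
  smooth_off0 f -> xi != 0 -> forall h : R, exists ab : R * R,
  [/\ `|ab.1| <= `|h|, `|ab.2| <= `|h| &
   f (z + h *: ev R i + h *: ev R j) xi - f (z + h *: ev R i) xi
     - f (z + h *: ev R j) xi + f z xi =
   h * (h * dx j (dx i f) (z + ab.1 *: ev R i + ab.2 *: ev R j) xi)].
Proof.
move=> hf xn0 h.
pose u (a : R) := f ((z + h *: ev R j) + a *: ev R i) xi - f (z + a *: ev R i) xi.
pose u' (a : R) := dx i f ((z + h *: ev R j) + a *: ev R i) xi - dx i f (z + a *: ev R i) xi.
have du : forall a : R, is_derive a 1 u (u' a).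
  by move=> a; apply: is_deriveB; exact: sm_dxu.
have [al hal Eu] := mvt0 h du.
pose v (b : R) := dx i f ((z + al *: ev R i) + b *: ev R j) xi.
have dv : forall b : R, is_derive b 1 v (dx j (dx i f) ((z + al *: ev R i) + b *: ev R j) xi).
  by move=> b; exact: (sm_dxu j (z + al *: ev R i) xi b (sm_iterd [:: (false, i)] hf) xn0).
have [be hbe Ev] := mvt0 h dv.
exists (al, be); split => //=.
have E : f (z + h *: ev R i + h *: ev R j) xi - f (z + h *: ev R i) xi
     - f (z + h *: ev R j) xi + f z xi = u h - u 0.
  rewrite /u !scale0r !addr0 (addrAC z (h *: ev R j)).
  by rewrite opprB addrA addrAC.
rewrite E Eu; congr (h * _).
have -> : u' al = v h - v 0.
  by rewrite /u' /v !scale0r !addr0 (addrAC z (h *: ev R j)).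
by rewrite Ev.
Qed.

Lemma schwarz {f : fnR} (i j : 'I_n) (z xi : vec) :
  smooth_off0 f -> xi != 0 -> dx i (dx j f) z xi = dx j (dx i f) z xi.
Proof.
move=> hf xn0.
have [ab1 h1] := choice (delta_mvt i j z xi hf xn0).
have [ab2 h2] := choice (delta_mvt j i z xi hf xn0).
have h1a : forall h, `|(ab1 h).1| <= `|h| by move=> h; case: (h1 h).
have h1b : forall h, `|(ab1 h).2| <= `|h| by move=> h; case: (h1 h).
have h2a : forall h, `|(ab2 h).1| <= `|h| by move=> h; case: (h2 h).
have h2b : forall h, `|(ab2 h).2| <= `|h| by move=> h; case: (h2 h).
pose L1 h := dx j (dx i f) (z + (ab1 h).1 *: ev R i + (ab1 h).2 *: ev R j) xi.
pose L2 h := dx i (dx j f) (z + (ab2 h).1 *: ev R j + (ab2 h).2 *: ev R i) xi.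
have c1 : L1 @ 0^' --> dx j (dx i f) z xi.
  have -> : L1 = (fun h => dx j (dx i f) (z + (ab1 h).1 *: ev R i + (ab1 h).2 *: ev R j)
      (xi + (fun _ => (0:R)) h *: ev R i)).
    by apply/funext => h; rewrite scale0r addr0.
  apply: (cvg_pt i j i (squeeze0 _ (nearW _ h1a) id0) (squeeze0 _ (nearW _ h1b) id0) (cvg_cst _)).
  exact: (sm_cont z xi (sm_iterd [:: (false, j); (false, i)] hf) xn0).
have c2 : L2 @ 0^' --> dx i (dx j f) z xi.
  have -> : L2 = (fun h => dx i (dx j f) (z + (ab2 h).1 *: ev R j + (ab2 h).2 *: ev R i)
      (xi + (fun _ => (0:R)) h *: ev R i)).
    by apply/funext => h; rewrite scale0r addr0.
  apply: (cvg_pt j i i (squeeze0 _ (nearW _ h2a) id0) (squeeze0 _ (nearW _ h2b) id0) (cvg_cst _)).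
  exact: (sm_cont z xi (sm_iterd [:: (false, i); (false, j)] hf) xn0).
have E : {near 0^', L2 =1 L1}.
  near=> h.
  have hn0 : h != 0 by near: h; exact: nbhs_dnbhs_neq.
  have [_ _ e1] := h1 h; have [_ _ e2] := h2 h.
  have e1' : _ = h * (h * L1 h) := e1.
  have e2' : _ = h * (h * L2 h) := e2.
  have e : h * (h * L2 h) = h * (h * L1 h).
    apply: etrans (esym e2') _; apply: etrans _ e1'.
    rewrite (addrAC z (h *: ev R j)); congr (_ + _); exact: addrAC.
  exact: (mulfI hn0 (mulfI hn0 e)).
have c2' : L1 @ 0^' --> dx i (dx j f) z xi.
  by apply: cvg_trans c2; apply: near_eq_cvg E.
exact: (cvg_unique (@Rhausdorff R) c2' c1).
Unshelve. all: by end_near.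
Qed.

End P4.

Section P5.
Context {R : realType} {n : nat}.
Local Notation vec := 'rV[R]_n.
Local Notation fnR := (fn R n).

Definition Hom (mu : R) (f : fnR) := forall (x xi : vec) (c : R), xi != 0 -> 0 < c ->
  f x (c *: xi) = c `^ mu * f x xi.
Definition Inv (f : fnR) := forall (x xi : vec) (tau : R), xi != 0 ->
  f (x + tau *: xi) xi = f x xi.

Lemma is_derive_uniq (F : R -> R) (x a b : R) :
  is_derive x 1 F a -> is_derive x 1 F b -> a = b.
Proof. by move=> [_ <-] [_ <-]. Qed.

Lemma dx_is_derive (g : fnR) (i : 'I_n) (x xi : vec) (V : R) :
  is_derive (0:R) 1 (fun t : R => g (x + t *: ev R i) xi) V -> dx i g x xi = V.
Proof. by move=> H; rewrite /dx derive1E; exact: derive_val. Qed.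

Lemma dxi_is_derive (g : fnR) (i : 'I_n) (x xi : vec) (V : R) :
  is_derive (0:R) 1 (fun t : R => g x (xi + t *: ev R i)) V -> dxi i g x xi = V.
Proof. by move=> H; rewrite /dxi derive1E; exact: derive_val. Qed.

Lemma is_derive_lin (tau : R) : is_derive (0:R) 1 (fun b : R => tau * b) tau.
Proof.
have := is_deriveZ tau (is_derive_id (0:R) (1:R)).
by rewrite [tau *: 1]mulr1.
Qed.

Lemma near0_nz (xi : vec) (j : 'I_n) : xi != 0 ->
  \forall b \near (0:R), xi + b *: ev R j != 0.
Proof.
move=> xn0; have [e e0 he] := nz_near j xn0.
by apply: filterS (nbhs0_lt e0) => b hb; exact: he.
Qed.

Lemma Inv_dx {f : fnR} (i : 'I_n) : Inv f -> Inv (dx i f).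
Proof.
move=> hI x xi tau xn0; rewrite /dx; congr (derive1 _ 0).
apply/funext => t; rewrite addrAC; exact: hI.
Qed.

Lemma alg_sub (A B C t : R) : t * A + 1 * B = C -> B = C - t * A.
Proof. by move=> <-; ring. Qed.

Lemma identI {f : fnR} (j : 'I_n) (z xi : vec) (tau : R) :
  smooth_off0 f -> Inv f -> xi != 0 ->
  dxi j f (z + tau *: xi) xi = dxi j f z xi - tau * dx j f (z + tau *: xi) xi.
Proof.
move=> hf hI xn0.
have H1 := D2 f (z + tau *: xi) xi j j (fun b : R => tau * b) (fun b : R => b) tau 1 hf xn0 (mulr0 tau) (erefl : (fun b : R => b) 0 = 0)
  (is_derive_lin tau) (is_derive_id (0:R) (1:R)).
have Hn : \forall b \near (0:R),
    f (z + tau *: xi + (tau * b) *: ev R j) (xi + b *: ev R j) = f z (xi + b *: ev R j).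
  near=> b.
  have hb : xi + b *: ev R j != 0 by near: b; exact: near0_nz.
  by rewrite -scalerA -addrA -scalerDr hI.
have H2 := near_eq_is_derive Hn H1.
have H3 := sm_dxi0 j z xi hf xn0.
apply: alg_sub; exact: is_derive_uniq H2 H3.
Unshelve. all: by end_near.
Qed.

Lemma alg_J (A B X Y t : R) : X = Y -> (A - t * X) - (B - t * Y) = A - B.
Proof. by move=> ->; rewrite opprB addrA subrK. Qed.

Lemma dxdxi_shift {f : fnR} (i j : 'I_n) (z xi : vec) (tau : R) :
  smooth_off0 f -> Inv f -> xi != 0 ->
  dx i (dxi j f) (z + tau *: xi) xi =
  dx i (dxi j f) z xi - tau * dx i (dx j f) (z + tau *: xi) xi.
Proof.
move=> hf hI xn0; apply: dx_is_derive.
have -> : (fun t : R => dxi j f (z + tau *: xi + t *: ev R i) xi) =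
    (fun t => dxi j f (z + t *: ev R i) xi) -
    tau \*: (fun t => dx j f (z + tau *: xi + t *: ev R i) xi).
  apply/funext => t /=; rewrite [z + tau *: xi + _]addrAC identI //.
  by rewrite [z + t *: ev R i + _]addrAC.
apply: is_deriveB; last apply: is_deriveZ.
  exact: (sm_dx0 i z xi (sm_iterd [:: (true, j)] hf) xn0).
exact: (sm_dx0 i (z + tau *: xi) xi (sm_iterd [:: (false, j)] hf) xn0).
Qed.

Lemma Inv_Jop {f : fnR} (i j : 'I_n) : smooth_off0 f -> Inv f -> Inv (Jop i j f).
Proof.
move=> hf hI z xi tau xn0; rewrite /Jop.
rewrite (dxdxi_shift i j z xi tau hf hI xn0) (dxdxi_shift j i z xi tau hf hI xn0).
apply: alg_J; exact: schwarz.
Qed.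

End P5.

Section P6.
Context {R : realType} {n : nat}.
Local Notation vec := 'rV[R]_n.
Local Notation fnR := (fn R n).

Lemma Hom_dx {f : fnR} (mu : R) (i : 'I_n) :
  smooth_off0 f -> Hom mu f -> Hom mu (dx i f).
Proof.
move=> hf hH x xi c xn0 c0; apply: dx_is_derive.
have -> : (fun t : R => f (x + t *: ev R i) (c *: xi)) =
    c `^ mu \*: (fun t => f (x + t *: ev R i) xi).
  by apply/funext => t /=; rewrite hH.
apply: is_deriveZ; exact: sm_dx0.
Qed.

Lemma Hom_dxi {f : fnR} (mu : R) (j : 'I_n) :
  smooth_off0 f -> Hom mu f -> Hom (mu - 1) (dxi j f).
Proof.
move=> hf hH x xi c xn0 c0; apply: dxi_is_derive.
have cn0 : c != 0 by rewrite gt_eqF.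
have [e e0 he] := nz_near j xn0.
have Hn : \forall b \near (0:R),
   (c `^ mu \*: ((fun b' => f x (xi + b' *: ev R j)) \o (fun b => c^-1 * b))) b =
   f x (c *: xi + b *: ev R j).
  near=> b.
  have hb : `|c^-1 * b| < e.
    near: b; apply: filterS (nbhs0_lt (mulr_gt0 e0 c0)) => b hb.
    by rewrite normrM gtr0_norm ?invr_gt0 // ltr_pdivrMl // mulrC.
  rewrite /=.
  have -> : c *: xi + b *: ev R j = c *: (xi + (c^-1 * b) *: ev R j).
    by rewrite scalerDr scalerA mulVKf.
  by rewrite hH // he.
have Hg : is_derive (c^-1 * 0) 1 (fun b' => f x (xi + b' *: ev R j)) (dxi j f x xi).
  by rewrite mulr0; exact: sm_dxi0.
have H := is_deriveZ (c `^ mu) (is_derive1_comp Hg (is_derive_lin c^-1)).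
have -> : c `^ (mu - 1) * dxi j f x xi = c `^ mu *: (dxi j f x xi * c^-1).
  rewrite powRB; last by rewrite cn0 implybT.
  by rewrite powRr1 ?ltW // -mulrA [c^-1 * _]mulrC.
exact: near_eq_is_derive Hn H.
Unshelve. all: by end_near.
Qed.

Lemma Hom_Jop {f : fnR} (mu : R) (i j : 'I_n) :
  smooth_off0 f -> Hom mu f -> Hom (mu - 1) (Jop i j f).
Proof.
move=> hf hH x xi c xn0 c0; rewrite /Jop.
rewrite (Hom_dx (mu - 1) i (sm_iterd [:: (true, j)] hf) (Hom_dxi mu j hf hH) x xi c xn0 c0).
rewrite (Hom_dx (mu - 1) j (sm_iterd [:: (true, i)] hf) (Hom_dxi mu i hf hH) x xi c xn0 c0).
by rewrite mulrBr.
Qed.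

Lemma near_nz {xi : vec} : xi != 0 -> \forall v \near xi, v != 0.
Proof.
move=> xn0; near=> v.
have h : `|xi - v| < `|xi|.
  by near: v; apply: (cvgr_dist_lt (F := nbhs xi) (fun v : vec => v) xi cvg_id); rewrite normr_gt0.
by apply/negP => /eqP v0; move: h; rewrite v0 subr0 ltxx.
Unshelve. all: by end_near.
Qed.

Lemma near_snd_nz (x : vec) {xi : vec} : xi != 0 ->
  \forall P \near (x, xi), (P : vec * vec).2 != 0.
Proof.
move=> xn0; have := near_nz xn0.
exact: (@cvg_snd _ _ (nbhs x) (nbhs xi) _ _).
Qed.

Section Sub.
Variables (f1 f2 : fnR).
Hypotheses (h1 : smooth_off0 f1) (h2 : smooth_off0 f2).
Let F : fnR := fun x xi => f1 x xi - f2 x xi.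

Lemma iterd_sub (s : seq (bool * 'I_n)) (x xi : vec) : xi != 0 ->
  iterd s F x xi = iterd s f1 x xi - iterd s f2 x xi.
Proof.
elim: s x xi => [|[b i] s IH] x xi xn0 //=.
case: b.
- apply: dxi_is_derive.
  have Hn : \forall t \near (0:R),
      ((fun t : R => iterd s f1 x (xi + t *: ev R i)) -
       (fun t : R => iterd s f2 x (xi + t *: ev R i))) t =
      iterd s F x (xi + t *: ev R i).
    near=> t.
    have ht : xi + t *: ev R i != 0 by near: t; exact: near0_nz.
    by rewrite /= IH.
  apply: near_eq_is_derive Hn _.
  by apply: is_deriveB; apply: sm_dxi0 => //; exact: sm_iterd.
- apply: dx_is_derive.
  have -> : (fun t : R => iterd s F (x + t *: ev R i) xi) =
    (fun t : R => iterd s f1 (x + t *: ev R i) xi) -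
    (fun t : R => iterd s f2 (x + t *: ev R i) xi).
    by apply/funext => t /=; rewrite IH.
  by apply: is_deriveB; apply: sm_dx0 => //; exact: sm_iterd.
Unshelve. all: by end_near.
Qed.

Lemma Sm_sub : smooth_off0 F.
Proof.
move=> s x xi xn0; split.
  move=> i; split.
    have -> : (fun t : R => iterd s F (x + t *: ev R i) xi) =
      (fun t : R => iterd s f1 (x + t *: ev R i) xi) -
      (fun t : R => iterd s f2 (x + t *: ev R i) xi).
      by apply/funext => t /=; rewrite iterd_sub.
    by apply: ex_derive; apply: is_deriveB; apply: sm_dx0 => //; exact: sm_iterd.
  have Hn : \forall t \near (0:R),
      ((fun t : R => iterd s f1 x (xi + t *: ev R i)) -
       (fun t : R => iterd s f2 x (xi + t *: ev R i))) t =
      iterd s F x (xi + t *: ev R i).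
    near=> t.
    have ht : xi + t *: ev R i != 0 by near: t; exact: near0_nz.
    by rewrite /= iterd_sub.
  apply: ex_derive; apply: near_eq_is_derive Hn _.
  by apply: is_deriveB; apply: sm_dxi0 => //; exact: sm_iterd.
have c1 := sm_cont x xi (sm_iterd s h1) xn0.
have c2 := sm_cont x xi (sm_iterd s h2) xn0.
have cd : (fun P : vec * vec => iterd s f1 P.1 P.2 - iterd s f2 P.1 P.2) @ (x, xi) -->
    iterd s f1 x xi - iterd s f2 x xi.
  exact: (cvgB c1 c2).
have E : {near (x, xi), (fun P : vec * vec => iterd s f1 P.1 P.2 - iterd s f2 P.1 P.2) =1
    (fun P : vec * vec => iterd s F P.1 P.2)}.
  apply: filterS (near_snd_nz x xn0) => P hP.
  by rewrite /= iterd_sub.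
have key := cvg_trans (near_eq_cvg E) cd.
rewrite -(iterd_sub s x xi xn0) in key; exact: key.
Unshelve. all: by end_near.
Qed.

End Sub.

Lemma Sm_Jop {f : fnR} (i j : 'I_n) : smooth_off0 f -> smooth_off0 (Jop i j f).
Proof.
move=> hf.
exact: (Sm_sub _ _ (sm_iterd [:: (false, i); (true, j)] hf) (sm_iterd [:: (false, j); (true, i)] hf)).
Qed.

End P6.

Section P7.
Context {R : realType}.

Lemma dM {f g : R -> R} {x df dg : R} : is_derive x 1 f df -> is_derive x 1 g dg ->
  is_derive x 1 (fun t => f t * g t) (f x * dg + g x * df).
Proof. by move=> H1 H2; have := is_deriveM H1 H2. Qed.

Lemma dB {f g : R -> R} {x df dg : R} : is_derive x 1 f df -> is_derive x 1 g dg ->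
  is_derive x 1 (fun t => f t - g t) (df - dg).
Proof. by move=> H1 H2; have := is_deriveB H1 H2. Qed.

Lemma dD {f g : R -> R} {x df dg : R} : is_derive x 1 f df -> is_derive x 1 g dg ->
  is_derive x 1 (fun t => f t + g t) (df + dg).
Proof. by move=> H1 H2; have := is_deriveD H1 H2. Qed.

Lemma dC (c x : R) : is_derive x 1 (fun _ : R => c) 0.
Proof. exact: is_derive_cst. Qed.

Lemma dId (x : R) : is_derive x 1 (fun t : R => t) 1.
Proof. exact: is_derive_id. Qed.

Lemma dV {f : R -> R} {x df : R} : f x != 0 -> is_derive x 1 f df ->
  is_derive x 1 (fun t => (f t)^-1) (- (f x) ^- 2 * df).
Proof. by move=> h H; have := is_deriveV h H. Qed.

Lemma dcomp {g f : R -> R} {x a b : R} : is_derive (f x) 1 g a -> is_derive x 1 f b ->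
  is_derive x 1 (fun t => g (f t)) (a * b).
Proof. by move=> H1 H2; have := is_derive1_comp H1 H2. Qed.

Lemma dsqrt {y : R} : 0 < y -> is_derive y 1 (@Num.sqrt R) (2 * Num.sqrt y)^-1.
Proof. exact: is_derive1_sqrt. Qed.

Lemma dpow (mu : R) {y : R} : 0 < y -> is_derive y 1 (fun z : R => z `^ mu) (mu * y `^ (mu - 1)).
Proof. exact: is_derive1_powR. Qed.

Variables (a c V mu : R).

Lemma d_den : is_derive (0:R) 1 (fun t : R => 1 - t * a) (- a).
Proof.
apply: is_derive_eq (dB (dC 1 0) (dM (dId 0) (dC a 0))) _.
by ring.
Qed.

Lemma d_Bf : is_derive (0:R) 1 (fun t : R => t * (1 - t * a)^-1) 1.
Proof.
have h0 : (fun t : R => 1 - t * a) 0 != 0 by rewrite /= mul0r subr0 oner_eq0.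
apply: is_derive_eq (dM (dId 0) (dV (f := fun t : R => 1 - t * a) h0 d_den)) _.
by rewrite /= ?expr2 ?mul0r ?mulr0 ?addr0 ?add0r ?subr0 ?sqrtr1 ?invr1 ?powR1 ?mulr1 ?mul1r; ring.
Qed.

Lemma d_Af : is_derive (0:R) 1 (fun t : R => t * (t * (1 - t * a)^-1) * c) 0.
Proof.
apply: is_derive_eq (dM (dM (dId 0) d_Bf) (dC c 0)) _.
by rewrite /= ?expr2 ?mul0r ?mulr0 ?addr0 ?add0r ?subr0 ?sqrtr1 ?invr1 ?powR1 ?mulr1 ?mul1r; ring.
Qed.

Lemma d_q : is_derive (0:R) 1 (fun t : R => 1 + t ^+ 2 * V) 0.
Proof.
have H : is_derive (0:R) 1 (fun t : R => 1 + (t * t) * V) 0.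
  apply: is_derive_eq (dD (dC 1 0) (dM (dM (dId 0) (dId 0)) (dC V 0))) _.
  by rewrite /= ?expr2 ?mul0r ?mulr0 ?addr0 ?add0r ?subr0 ?sqrtr1 ?invr1 ?powR1 ?mulr1 ?mul1r; ring.
by under eq_fun do rewrite expr2.
Qed.

Lemma d_sq : is_derive (0:R) 1 (fun t : R => Num.sqrt (1 + t ^+ 2 * V)) 0.
Proof.
have h1 : 0 < (fun t : R => 1 + t ^+ 2 * V) 0 by rewrite /= expr2 mul0r mul0r addr0 ltr01.
apply: is_derive_eq (dcomp (f := fun t : R => 1 + t ^+ 2 * V) (dsqrt h1) d_q) _.
by rewrite /= ?expr2 ?mul0r ?mulr0 ?addr0 ?add0r ?subr0 ?sqrtr1 ?invr1 ?powR1 ?mulr1 ?mul1r; ring.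
Qed.

Lemma d_cf : is_derive (0:R) 1
  (fun t : R => (1 - t * a) * (Num.sqrt (1 + t ^+ 2 * V))^-1) (- a).
Proof.
have h0 : (fun t : R => Num.sqrt (1 + t ^+ 2 * V)) 0 != 0.
  by rewrite /= expr2 !mul0r addr0 sqrtr1 oner_eq0.
apply: is_derive_eq (dM d_den (dV (f := fun t : R => Num.sqrt (1 + t ^+ 2 * V)) h0 d_sq)) _.
by rewrite /= ?expr2 ?mul0r ?mulr0 ?addr0 ?add0r ?subr0 ?sqrtr1 ?invr1 ?powR1 ?mulr1 ?mul1r; ring.
Qed.

Lemma d_cfpow : is_derive (0:R) 1
  (fun t : R => ((1 - t * a) * (Num.sqrt (1 + t ^+ 2 * V))^-1) `^ mu) (mu * - a).
Proof.
have h1 : 0 < (fun t : R => (1 - t * a) * (Num.sqrt (1 + t ^+ 2 * V))^-1) 0.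
  by rewrite /= expr2 !mul0r addr0 sqrtr1 subr0 invr1 mulr1 ltr01.
apply: is_derive_eq (dcomp (f := fun t : R => (1 - t * a) * (Num.sqrt (1 + t ^+ 2 * V))^-1) (dpow mu h1) d_cf) _.
have p1 : forall y : R, y = 1 -> y `^ (mu - 1) = 1 by move=> y ->; rewrite powR1.
rewrite /= ?expr2 ?mul0r ?mulr0 ?addr0 ?add0r ?subr0 ?sqrtr1 ?invr1 p1 ?mulr1 //.
Qed.

End P7.

Section P8.
Context {R : realType} {n : nat}.
Local Notation vec := 'rV[R]_n.
Local Notation fnR := (fn R n).

Lemma Xop_is_derive (g : fnR) (i : 'I_n) (x xi : vec) (V : R) :
  is_derive (0:R) 1 (fun t : R => g (x + t *: (ev R i - xi 0 i *: xi)) xi) V ->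
  Xop i g x xi = V.
Proof. by move=> H; rewrite /Xop derive1E; exact: derive_val. Qed.

Lemma Xiop_is_derive (g : fnR) (i : 'I_n) (x xi : vec) (V : R) :
  is_derive (0:R) 1 (fun t : R => g (curve_x i x xi t) (curve_xi i x xi t)) V ->
  Xiop i g x xi = V.
Proof. by move=> H; rewrite /Xiop derive1E; exact: derive_val. Qed.

Lemma Xop_f {f : fnR} (i : 'I_n) (x xi : vec) : Inv f -> inTS x xi ->
  Xop i f x xi = dx i f x xi.
Proof.
move=> hI hT; rewrite /Xop /dx; congr (derive1 _ 0); apply/funext => t.
have -> : x + t *: (ev R i - xi 0 i *: xi) = (x + t *: ev R i) + (- (t * xi 0 i)) *: xi.
  by apply/rowP => k; rewrite !mxE; ring.
by rewrite hI // (inTS_neq0 hT).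
Qed.

Lemma Xop_loc (g f : fnR) (i : 'I_n) (x xi : vec) :
  (forall x' xi', inTS x' xi' -> g x' xi' = f x' xi') -> inTS x xi ->
  Xop i g x xi = Xop i f x xi.
Proof.
move=> hgf hT; rewrite /Xop; congr (derive1 _ 0); apply/funext => t.
by apply: hgf; exact: (TS_line i x xi t hT).
Qed.

Lemma Xiop_loc (g f : fnR) (i : 'I_n) (x xi : vec) :
  (forall x' xi', inTS x' xi' -> g x' xi' = f x' xi') -> inTS x xi ->
  Xiop i g x xi = Xiop i f x xi.
Proof.
move=> hgf hT; rewrite /Xiop; congr (derive1 _ 0); apply/funext => t.
by apply: hgf; exact: (TS_curve i x xi t hT).
Qed.

Lemma curve_id {f : fnR} (mu : R) (i : 'I_n) (x xi : vec) (t : R) :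
  Hom mu f -> Inv f -> inTS x xi -> 0 < 1 - t * xi 0 i ->
  f (curve_x i x xi t) (curve_xi i x xi t) =
  ((1 - t * xi 0 i) * (Num.sqrt (1 + t ^+ 2 * dot (vdir i xi) (vdir i xi)))^-1) `^ mu *
  f (x + (t * (t * (1 - t * xi 0 i)^-1) * x 0 i) *: ev R i)
    (xi + (t * (1 - t * xi 0 i)^-1) *: ev R i).
Proof.
move=> hH hI hT hd.
have dn0 : 1 - t * xi 0 i != 0 by rewrite gt_eqF.
have Eeta : xi + t *: vdir i xi =
    (1 - t * xi 0 i) *: (xi + (t * (1 - t * xi 0 i)^-1) *: ev R i).
  apply/rowP => k; rewrite /vdir !mxE; field; exact: dn0.
have hq := dot_eta i x xi t hT.
have hq1 := dot_eta_ge1 i x xi t hT.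
have hsq : 0 < Num.sqrt (1 + t ^+ 2 * dot (vdir i xi) (vdir i xi)).
  by rewrite sqrtr_gt0 -hq; exact: lt_le_trans ltr01 hq1.
have c0 : 0 < (1 - t * xi 0 i) * (Num.sqrt (1 + t ^+ 2 * dot (vdir i xi) (vdir i xi)))^-1.
  by rewrite mulr_gt0 // invr_gt0.
have Ew : curve_xi i x xi t =
  ((1 - t * xi 0 i) * (Num.sqrt (1 + t ^+ 2 * dot (vdir i xi) (vdir i xi)))^-1) *:
  (xi + (t * (1 - t * xi 0 i)^-1) *: ev R i).
  by rewrite curve_xiE /enorm hq Eeta scalerA mulrC.
have zn0 : xi + (t * (1 - t * xi 0 i)^-1) *: ev R i != 0.
  apply/negP => /eqP z0; move: hq1; rewrite Eeta z0 scaler0 dot0l.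
  by rewrite ler10.
have wn0 : curve_xi i x xi t != 0.
  by rewrite Ew scaler_eq0 negb_or zn0 andbT gt_eqF.
rewrite curve_xE.
set y := x - (t * x 0 i) *: xi.
rewrite -scaleNr hI // Ew hH //.
congr (_ * _).
have -> : y =
   (x + (t * (t * (1 - t * xi 0 i)^-1) * x 0 i) *: ev R i) +
   (- (t * x 0 i)) *: (xi + (t * (1 - t * xi 0 i)^-1) *: ev R i).
  by apply/rowP => k; rewrite !mxE; ring.
by rewrite hI.
Qed.

Lemma near_den (a : R) : \forall t \near (0:R), 0 < 1 - t * a.
Proof.
have hp : 0 < (`|a| + 1)^-1 by rewrite invr_gt0 ltr_wpDl.
near=> t.
have ht : `|t| < (`|a| + 1)^-1.
  by near: t; apply: filterS (nbhs0_lt hp) => t'.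
have h1 : `|t| * (`|a| + 1) < 1.
  by rewrite -ltr_pdivlMr ?div1r // ltr_wpDl.
have h2 : 0 <= `|t| := normr_ge0 t.
rewrite subr_gt0; apply: le_lt_trans (ler_norm _) _; rewrite normrM.
move: h1; rewrite mulrDr mulr1 => h1; lra.
Unshelve. all: by end_near.
Qed.

Lemma Xiop_f {f : fnR} (mu : R) (i : 'I_n) (x xi : vec) :
  smooth_off0 f -> Hom mu f -> Inv f -> inTS x xi ->
  Xiop i f x xi = dxi i f x xi - mu * xi 0 i * f x xi.
Proof.
move=> hf hH hI hT; have xn0 := inTS_neq0 hT.
apply: Xiop_is_derive.
have A0 : (fun t : R => t * (t * (1 - t * xi 0 i)^-1) * x 0 i) 0 = 0 by rewrite /= !mul0r.
have B0 : (fun t : R => t * (1 - t * xi 0 i)^-1) 0 = 0 by rewrite /= mul0r.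
have HK := D2 f x xi i i (fun t : R => t * (t * (1 - t * xi 0 i)^-1) * x 0 i)
  (fun t : R => t * (1 - t * xi 0 i)^-1) 0 1 hf xn0
  A0 B0
  (d_Af (xi 0 i) (x 0 i)) (d_Bf (xi 0 i)).
have H := dM (d_cfpow (xi 0 i) (dot (vdir i xi) (vdir i xi)) mu) HK.
have Hn : \forall t \near (0:R),
  ((1 - t * xi 0 i) * (Num.sqrt (1 + t ^+ 2 * dot (vdir i xi) (vdir i xi)))^-1) `^ mu *
  f (x + (t * (t * (1 - t * xi 0 i)^-1) * x 0 i) *: ev R i)
    (xi + (t * (1 - t * xi 0 i)^-1) *: ev R i) =
  f (curve_x i x xi t) (curve_xi i x xi t).
  near=> t.
  have ht : 0 < 1 - t * xi 0 i by near: t; exact: near_den.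
  by rewrite (curve_id mu i x xi t hH hI hT ht).
apply: is_derive_eq (near_eq_is_derive Hn H) _.
have p1 : forall y : R, y = 1 -> y `^ mu = 1 by move=> y ->; rewrite powR1.
rewrite /= ?expr2 ?mul0r ?mulr0 ?addr0 ?add0r ?subr0 ?sqrtr1 ?invr1 ?scale0r ?addr0 p1 ?mulr1 //.
ring.
Unshelve. all: by end_near.
Qed.

End P8.

Section P9.
Context {R : realType} {n : nat}.
Local Notation vec := 'rV[R]_n.
Local Notation fnR := (fn R n).

Lemma XXi {f : fnR} (mu : R) (i j : 'I_n) (x xi : vec) :
  smooth_off0 f -> Hom mu f -> Inv f -> inTS x xi ->
  Xop i (Xiop j f) x xi =
  dx i (dxi j f) x xi + xi 0 i * dx j f x xi - mu * xi 0 j * dx i f x xi.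
Proof.
move=> hf hH hI hT; have xn0 := inTS_neq0 hT.
apply: Xop_is_derive.
have -> : (fun t : R => Xiop j f (x + t *: (ev R i - xi 0 i *: xi)) xi) =
   (fun t : R => dxi j f (x + t *: ev R i) xi
      + (t * xi 0 i) * dx j f (x + t *: ev R i) xi
      - mu * xi 0 j * f (x + t *: ev R i) xi).
  apply/funext => t.
  rewrite (Xiop_f mu j _ _ hf hH hI (TS_line i x xi t hT)).
  have -> : x + t *: (ev R i - xi 0 i *: xi) = (x + t *: ev R i) + (- (t * xi 0 i)) *: xi.
    by apply/rowP => k; rewrite !mxE; ring.
  rewrite identI // (Inv_dx j hI) // hI //.
  by rewrite mulNr opprK.
have H1 := sm_dx0 i x xi (sm_iterd [:: (true, j)] hf) xn0.
have H2 := sm_dx0 i x xi (sm_iterd [:: (false, j)] hf) xn0.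
have H3 := sm_dx0 i x xi hf xn0.
have H := dB (dD H1 (dM (dM (dId 0) (dC (xi 0 i) 0)) H2)) (dM (dC (mu * xi 0 j) 0) H3).
apply: is_derive_eq H _.
rewrite /= ?scale0r ?addr0; ring.
Qed.

Lemma alg_K (A B Di Dj a b mu : R) :
  (A + a * Dj - mu * b * Di) - (B + b * Di - mu * a * Dj)
   - (mu + 1) * (a * Dj - b * Di) = A - B.
Proof. ring. Qed.

Lemma K1 {f g : fnR} (mu : R) (i j : 'I_n) (x xi : vec) :
  smooth_off0 f -> Hom mu f -> Inv f ->
  (forall x' xi', inTS x' xi' -> g x' xi' = f x' xi') -> inTS x xi ->
  Eop (mu + 1) i j g x xi = Jop i j f x xi.
Proof.
move=> hf hH hI hgf hT.
have hXi : forall k, forall x' xi', inTS x' xi' -> Xiop k g x' xi' = Xiop k f x' xi'.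
  by move=> k x' xi' hT'; exact: Xiop_loc.
rewrite /Eop /calJ.
rewrite (Xop_loc _ _ i _ _ (hXi j) hT) (Xop_loc _ _ j _ _ (hXi i) hT).
rewrite (Xop_loc _ _ j _ _ hgf hT) (Xop_loc _ _ i _ _ hgf hT).
rewrite (XXi mu i j _ _ hf hH hI hT) (XXi mu j i _ _ hf hH hI hT).
rewrite (Xop_f j _ _ hI hT) (Xop_f i _ _ hI hT).
rewrite /Jop; exact: alg_K.
Qed.

Lemma props (psi : fnR) (lam : R) :
  smooth_off0 psi -> Hom lam psi -> Inv psi ->
  forall s : seq ('I_n * 'I_n),
  [/\ smooth_off0 (Jprod s psi), Hom (lam - (size s)%:R) (Jprod s psi)
    & Inv (Jprod s psi)].
Proof.
move=> h1 h2 h3; elim => [|p s [g1 g2 g3]] /=.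
  by rewrite subr0; split.
split.
- exact: Sm_Jop.
- rewrite -natr1 opprD addrA; exact: Hom_Jop.
- exact: Inv_Jop.
Qed.

Fixpoint Eg (C : nat -> R) (s : seq ('I_n * 'I_n)) (m : nat) (f : fnR) : fnR :=
  match s with
  | [::] => f
  | p :: s' => Eop (C m) p.1 p.2 (Eg C s' m.+1 f)
  end.

Lemma foldr_Eg (C : nat -> R) (s : seq ('I_n * 'I_n)) (m : nat) (f : fnR) :
  foldr (fun pl g => Eop (C pl.2) pl.1.1 pl.1.2 g) f (zip s (iota m (size s)))
  = Eg C s m f.
Proof. by elim: s m => [|p s IH] m //=; rewrite IH. Qed.

Lemma main_claim (psi : fnR) (lam : R) :
  smooth_off0 psi -> Hom lam psi -> Inv psi ->
  forall (s : seq ('I_n * 'I_n)) (m : nat) (C : nat -> R),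
  (forall j : nat, (j < size s)%N -> C (m + j)%N = lam - (size s)%:R + j%:R + 2) ->
  forall x xi, inTS x xi -> Jprod s psi x xi = Eg C s m (restrTS psi) x xi.
Proof.
move=> h1 h2 h3; elim => [|p s IH] m C hC x xi hT /=.
  by rewrite /restrTS hT.
have [g1 g2 g3] := props _ _ h1 h2 h3 s.
have Cm : C m = (lam - (size s)%:R) + 1.
  have := hC 0%N (ltn0Sn _); rewrite addn0 => ->.
  rewrite /= -natr1; ring.
rewrite Cm; symmetry; apply: K1 g1 g2 g3 _ hT.
move=> x' xi' hT'; symmetry; apply: IH => // j hj.
have := hC j.+1 hj; rewrite addSnnS => ->.
rewrite /= -!natr1; ring.
Qed.

End P9.

Theorem lemma3p2 (R : realType) (n : nat) (lam : R) (psi : 'rV[R]_n -> 'rV[R]_n -> R)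
  (Hsmooth : smooth_off0 psi)
  (Hhom : forall (x xi : 'rV[R]_n) (c : R), xi != 0 -> 0 < c ->
            psi x (c *: xi) = c `^ lam * psi x xi)
  (Hinv : forall (x xi : 'rV[R]_n) (tau : R), xi != 0 ->
            psi (x + tau *: xi) xi = psi x xi)
  (k : nat) (Hk : (1 <= k)%N) (s : seq ('I_n * 'I_n)) (Hs : size s = k) :
  forall x xi : 'rV[R]_n, inTS x xi ->
    Jprod s psi x xi = Eprod lam s (restrTS psi) x xi.
Proof.
move=> x xi hT.
rewrite /Eprod (foldr_Eg (fun l => lam - (size s)%:R + l%:R + 1) s 1).
apply: (main_claim _ _ Hsmooth Hhom Hinv) => // j hj.
rewrite add1n -natr1; ring.
Qed.
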